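(* Let $f:[-1,1]^n \to [-1,1]$ be a multilinear function and let $D$ be a distribution over $\mathbb{R}$ with mean $\mu$ and variance $\sigma^2 < 1-\mu^2$. Then for every nonnegative integer $d$ there exists a polynomial $f^{\le d}$ of degree at most $d$ such that $$\mathbb{E}_{x \sim D^{\otimes n}}\big[(f(x) - f^{\le d}(x))^2\big] \le \Big( \frac{\sigma^2}{1-\mu^2} \Big)^d .$$
   Context: A function on $[-1,1]^n$ is multilinear if it is a polynomial of degree at most one in each variable. $D^{\otimes n}$ is the product distribution with i.i.d. coordinates of law $D$. *)

(* Defs.v *)
From HB Require Import structures.
From mathcomp Require Import all_boot all_order all_algebra.
From mathcomp Require Import all_classical all_reals all_analysis.
From mathcomp Require mpoly.
Set Implicit Arguments. Unset Strict Implicit. Unset Printing Implicit Defensive.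
Import Order.TTheory GRing.Theory Num.Theory.
Local Open Scope ring_scope.
Local Open Scope ereal_scope.

Definition peval {R : realType} {n : nat} (p : mpoly.mpoly n R) (x : 'rV[R]_n) : R :=
  mpoly.meval (fun i : 'I_n => x ord0 i) p.

Definition multilinear {R : realType} {n : nat} (p : mpoly.mpoly n R) : Prop :=
  forall m : mpoly.multinom n, mpoly.mcoeff m p != 0%R -> forall i : 'I_n, (mpoly.fun_of_multinom m i <= 1)%N.

Definition deg_le {R : realType} {n : nat} (p : mpoly.mpoly n R) (d : nat) : Prop :=
  forall m : mpoly.multinom n, mpoly.mcoeff m p != 0%R -> (mpoly.mdeg m <= d)%N.

(* Expectation of a nonnegative function F under the product distribution
   D^{(x) n} on R^n, computed as the iterated integral
   \int D(dx_0) \int D(dx_1) ... F(x_0,...,x_{n-1})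
   (equal to the product-measure integral by Tonelli). *)
Fixpoint prodE {R : realType} (D : probability R R) (n : nat) :
    ('rV[R]_n -> \bar R) -> \bar R :=
  match n return ('rV[R]_n -> \bar R) -> \bar R with
  | 0%N => fun F => F (const_mx 0%R)
  | n'.+1 => fun F =>
      \int[D]_t prodE D
        (fun v : 'rV[R]_n' => F (row_mx (const_mx (t : R) : 'rV[R]_1) v))
  end.

(* Main.v *)
Require Import Defs.
From HB Require Import structures.
From mathcomp Require Import all_boot all_order all_algebra.
From mathcomp Require Import all_classical all_reals all_analysis.
From mathcomp Require mpoly.
From mathcomp Require Import ring lra zify measurable_realfun.
Import Order.TTheory GRing.Theory Num.Theory.
Local Open Scope ring_scope.


Fixpoint ML (R : realType) (n : nat) : Type :=
  match n with 0 => R | n'.+1 => (ML R n' * ML R n')%type end.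

Fixpoint mleval (R : realType) (mu : R) (n : nat) : ML R n -> 'rV[R]_n -> R :=
  match n return ML R n -> 'rV[R]_n -> R with
  | 0 => fun c _ => c
  | n'.+1 => fun T x =>
      mleval R mu n' T.1 (rsubmx (x : 'rV_(1 + n'))) +
      ((lsubmx (x : 'rV_(1 + n'))) ord0 ord0 - mu) * mleval R mu n' T.2 (rsubmx (x : 'rV_(1 + n')))
  end.
Arguments mleval {R} mu {n}.

Fixpoint mlzero (R : realType) (n : nat) : ML R n :=
  match n return ML R n with 0 => 0 | n'.+1 => (mlzero R n', mlzero R n') end.

Fixpoint mladd (R : realType) (n : nat) : ML R n -> ML R n -> ML R n :=
  match n return ML R n -> ML R n -> ML R n with
  | 0 => fun a b => a + b
  | n'.+1 => fun T U => (mladd R n' T.1 U.1, mladd R n' T.2 U.2) end.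
Arguments mladd {R n}.

Fixpoint mlscale (R : realType) (n : nat) (c : R) : ML R n -> ML R n :=
  match n return ML R n -> ML R n with
  | 0 => fun a => c * a
  | n'.+1 => fun T => (mlscale R n' c T.1, mlscale R n' c T.2) end.
Arguments mlscale {R n}.

Fixpoint mlB (R : realType) (s : R) (n : nat) : ML R n -> ML R n -> R :=
  match n return ML R n -> ML R n -> R with
  | 0 => fun a b => a * b
  | n'.+1 => fun T U => mlB R s n' T.1 U.1 + s * mlB R s n' T.2 U.2 end.
Arguments mlB {R} s {n}.

Definition mlQ {R : realType} (s : R) {n} (T : ML R n) := mlB s T T.


Ltac genall := repeat match goal with
  | |- context [mleval ?mu ?T ?x] => generalize (mleval mu T x); intro
  | |- context [@mlB ?R ?s ?n ?T ?U] => generalize (@mlB R s n T U); intro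
  | |- context [lsubmx ?x ?i ?j] => generalize (lsubmx x i j); intro
  end.

Lemma mleval_zero R mu n x : mleval mu (mlzero R n) x = 0.
Proof. elim: n x => [//|n IH] x /=; by rewrite !IH mulr0 addr0. Qed.

Lemma mleval_add R mu n (T U : ML R n) x :
  mleval mu (mladd T U) x = mleval mu T x + mleval mu U x.
Proof. elim: n T U x => [//|n IH] T U x /=; rewrite !IH; genall; ring. Qed.

Lemma mleval_scale R mu n c (T : ML R n) x :
  mleval mu (mlscale c T) x = c * mleval mu T x.
Proof. elim: n T x => [//|n IH] T x /=; rewrite !IH; genall; ring. Qed.

Lemma mlB_addl R s n (T U V : ML R n) : mlB s (mladd T U) V = mlB s T V + mlB s U V.
Proof. elim: n T U V => [|n IH] T U V /=; rewrite ?IH; genall; ring. Qed.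

Lemma mlB_scalel R s n c (T V : ML R n) : mlB s (mlscale c T) V = c * mlB s T V.
Proof. elim: n T V => [|n IH] T V /=; rewrite ?IH; genall; ring. Qed.

Lemma mlB_sym R s n (T V : ML R n) : mlB s T V = mlB s V T.
Proof. elim: n T V => [|n IH] T V /=; first by genall; ring. by rewrite (IH T.1) (IH T.2). Qed.

Lemma mlB_addr R s n (T U V : ML R n) : mlB s V (mladd T U) = mlB s V T + mlB s V U.
Proof. by rewrite mlB_sym mlB_addl !(@mlB_sym _ _ _ V). Qed.

Lemma mlB_scaler R s n c (T V : ML R n) : mlB s V (mlscale c T) = c * mlB s V T.
Proof. by rewrite mlB_sym mlB_scalel (@mlB_sym _ _ _ V). Qed.

Lemma mlQ_comb R s n (a b : ML R n) c :
  mlQ s (mladd a (mlscale c b)) = mlQ s a + 2 * c * mlB s a b + c ^+ 2 * mlQ s b.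
Proof.
rewrite /mlQ !mlB_addl !mlB_addr !mlB_scalel !mlB_scaler (@mlB_sym _ _ _ b a); genall; ring.
Qed.

Lemma mlQ_ge0 (R : realType) (s : R) n (T : ML R n) : 0 <= s -> 0 <= mlQ s T.
Proof.
rewrite /mlQ; elim: n T => [|n IH] T s0 /=; first by rewrite -expr2 sqr_ge0.
by rewrite addr_ge0 ?mulr_ge0 ?IH.
Qed.

Lemma mlQ_mono (R : realType) (s sp : R) n (T : ML R n) : 0 <= s <= sp -> mlQ s T <= mlQ sp T.
Proof.
move=> /andP[s0 ss]; rewrite /mlQ; elim: n T => [//|n IH] T /=.
apply: lerD; first exact: IH.
apply: (le_trans (ler_wpM2l s0 (IH _))).
apply: ler_wpM2r => //; exact: (@mlQ_ge0 _ sp _ T.2 (le_trans s0 ss)).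
Qed.


Lemma int_quad (R : realType) (D : probability R R) (mu s2 a b c : R) :
  D.-integrable setT (fun t : R => t%:E) ->
  (\int[D]_t (t%:E) = mu%:E)%E ->
  (\int[D]_t (((t - mu) ^+ 2)%:E) = s2%:E)%E ->
  (\int[D]_t ((a + b * (t - mu) + c * (t - mu) ^+ 2)%:E) = (a + c * s2)%:E)%E.
Proof.
move=> ht hm hv.
have hc k : D.-integrable setT (fun t : R => k%:E).
  exact: (finite_measure_integrable_cst D k measurableT).
have hv2 : D.-integrable setT (fun t : R => ((t - mu) ^+ 2)%:E).
  apply/integrableP; split.
    apply/measurable_EFinP; apply: measurable_funX; apply: measurable_funB => //.
  under eq_integral => t _ do rewrite gee0_abs ?lee_fin ?sqr_ge0 //.
  by rewrite hv ltry.
rewrite (_ : (fun t => _) = (fun t => (a - b * mu)%:E + ((b%:E * t%:E) + (c%:E * ((t - mu) ^+ 2)%:E)))%E); last first.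
  by apply: funext => t; rewrite -!EFinM -!EFinD; congr EFin; ring.
rewrite integralD //; last first.
  by apply: integrableD => //; apply: integrableZl.
rewrite integralD //; try by apply: integrableZl.
rewrite !integralZl // hm hv integral_cst //.
have HD : (D setT = 1)%E by exact: probability_setT.
rewrite [X in (_ * X)%E]HD mule1 -!EFinM -!EFinD; congr EFin; ring.
Qed.


Lemma mleval_row (R : realType) mu n (a b : ML R n) (t : R) v :
  mleval mu ((a, b) : ML R n.+1) (row_mx (const_mx t : 'rV[R]_1) v) =
  mleval mu (mladd a (mlscale (t - mu) b)) v.
Proof.
by rewrite /= row_mxKl row_mxKr mxE mleval_add mleval_scale.
Qed.

Lemma prodE_Q (R : realType) (D : probability R R) (mu s2 : R) n (T : ML R n) :
  D.-integrable setT (fun t : R => t%:E) ->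
  (\int[D]_t (t%:E) = mu%:E)%E ->
  (\int[D]_t (((t - mu) ^+ 2)%:E) = s2%:E)%E ->
  prodE D (fun x => (mleval mu T x ^+ 2)%:E) = (mlQ s2 T)%:E.
Proof.
move=> ht hm hv; elim: n T => [|n IH] T; first by rewrite /= expr2.
case: T => a b /=.
transitivity (\int[D]_t ((mlQ s2 a + (2 * mlB s2 a b) * (t - mu) + mlQ s2 b * (t - mu) ^+ 2)%:E))%E.
  apply: eq_integral => t _.
  rewrite (_ : (fun v => _) = (fun v => (mleval mu (mladd a (mlscale (t - mu) b)) v ^+ 2)%:E)).
    by rewrite IH mlQ_comb; congr EFin; genall; ring.
  by apply: funext => v; rewrite -mleval_row.
by rewrite (int_quad _ _ _ _ _ _ _ ht hm hv) /mlQ /= mulrC.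
Qed.


Lemma row_cube (R : realType) n (c : R) (v : 'rV[R]_n) :
  -1 <= c <= 1 -> (forall i, -1 <= v ord0 i <= 1) ->
  forall i : 'I_(1 + n), -1 <= (row_mx (const_mx c : 'rV_1) v) ord0 i <= 1.
Proof.
move=> hc hv i; case: (splitP i) => j hj.
  have -> : i = lshift n j by apply: val_inj.
  by rewrite row_mxEl mxE.
have -> : i = rshift 1 j by apply: val_inj.
by rewrite row_mxEr.
Qed.

Lemma Qp_le1 (R : realType) (mu : R) n (T : ML R n) : -1 < mu < 1 ->
  (forall x : 'rV[R]_n, (forall i, -1 <= x ord0 i <= 1) -> mleval mu T x ^+ 2 <= 1) ->
  mlQ (1 - mu ^+ 2) T <= 1.
Proof.
move=> /andP[hm1 hm2]; elim: n T => [|n IH] T hT.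
  have h0 : forall i, -1 <= (const_mx 0 : 'rV[R]_0) ord0 i <= 1 by case.
  by have := hT _ h0; rewrite /mlQ /= expr2.
case: T hT => a b hT.
have h1 := IH (mladd a (mlscale (1 - mu) b)).
have h2 := IH (mladd a (mlscale (-1 - mu) b)).
have c1 : -1 <= (1 : R) <= 1 by apply/andP; split; lra.
have c2 : -1 <= (-1 : R) <= 1 by apply/andP; split; lra.
have {h1}h1 := h1 (fun v hv => ltac:(rewrite -mleval_row; apply: hT; exact: row_cube)).
have {h2}h2 := h2 (fun v hv => ltac:(rewrite -mleval_row; apply: hT; exact: row_cube)).
rewrite !mlQ_comb in h1 h2.
move: h1 h2; rewrite /mlQ /=; genall; intros.
nra.
Qed.


Fixpoint deg_ok (R : realType) (n : nat) : ML R n -> nat -> Prop :=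
  match n return ML R n -> nat -> Prop with
  | 0 => fun _ _ => True
  | n'.+1 => fun T d => deg_ok R n' T.1 d /\
      match d with 0 => T.2 = mlzero R n' | d'.+1 => deg_ok R n' T.2 d' end
  end.
Arguments deg_ok {R n}.

Lemma mladd_zero (R : realType) n c (b : ML R n) : mladd b (mlscale c (mlzero R n)) = b.
Proof.
elim: n b => [|n IH] b /=; first by rewrite mulr0 addr0.
by rewrite !IH; case: b.
Qed.

Lemma step_ineq (R : realType) (s sp r X Y A B : R) : 0 <= s -> 0 < sp ->
  X <= s / sp * r * A -> Y <= r * B -> X + s * Y <= s / sp * r * (A + sp * B).
Proof.
move=> hs hsp hX hY.
have h1 : s * Y <= s * (r * B) by exact: ler_wpM2l.
have -> : s / sp * r * (A + sp * B) = s / sp * r * A + s * (r * B).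
  by field; rewrite gt_eqF.
exact: lerD.
Qed.

Lemma ml_approx (R : realType) (s sp : R) n (T : ML R n) d :
  0 <= s -> s <= sp -> 0 < sp ->
  exists G : ML R n, deg_ok G d /\
    mlQ s (mladd T (mlscale (-1) G)) <= (s / sp) ^+ d.+1 * mlQ sp T.
Proof.
move=> hs hsp hp.
have hr : 0 <= s / sp by rewrite divr_ge0 // ltW.
elim: n T d => [|n IH] T d.
  exists T; split => //; rewrite /mlQ /=.
  have -> : (T + -1 * T) * (T + -1 * T) = 0 by ring.
  by apply: mulr_ge0; [exact: exprn_ge0 | rewrite -expr2 sqr_ge0].
case: T => a b.
have [GA [dA hA]] := IH a d.
have [GB [dB hB]] : exists GB : ML R n,
    (match d with 0 => GB = mlzero R n | d'.+1 => deg_ok GB d' end) /\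
    mlQ s (mladd b (mlscale (-1) GB)) <= (s / sp) ^+ d * mlQ sp b.
  case: d {dA hA} => [|d'].
    exists (mlzero R n); split => //.
    rewrite mladd_zero expr0 mul1r; apply: mlQ_mono.
    by rewrite hs hsp.
  exact: IH.
exists (GA, GB); split; first by split.
move: hA hB; rewrite exprS /mlQ /=.
genall; move=> hA hB; exact: (@step_ineq R s sp _ _ _ _ _ hs hp hA hB).
Qed.

Import -(notations) mpoly.


Fixpoint t2m (R : realType) (mu : R) (N n : nat) : ('I_n -> 'I_N) -> ML R n -> mpoly.mpoly N R :=
  match n return ('I_n -> 'I_N) -> ML R n -> mpoly.mpoly N R with
  | 0 => fun _ c => mpoly.mpolyC N c
  | n'.+1 => fun emb T =>
     t2m R mu N n' (fun i => emb (rshift 1 i)) T.1 +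
     (@mpoly.mpolyX N R (mpoly.mnm1 (emb (lshift n' (ord0 : 'I_1)))) - mpoly.mpolyC N mu) *
     t2m R mu N n' (fun i => emb (rshift 1 i)) T.2
  end.
Arguments t2m {R} mu {N n}.

Lemma t2m_eval (R : realType) (mu : R) N n (emb : 'I_n -> 'I_N) (T : ML R n) (v : 'I_N -> R) :
  mpoly.meval v (t2m mu emb T) = mleval mu T (\row_i v (emb i)).
Proof.
elim: n emb T => [|n IH] emb T /=; first by rewrite mpoly.mevalC.
rewrite mpoly.mevalD mpoly.mevalM mpoly.mevalB mpoly.mevalC mpoly.mevalXU !IH.
have -> : rsubmx (\row_i v (emb i) : 'rV_(1 + n)) = \row_i v (emb (rshift 1 i)).
  by apply/rowP => i; rewrite !mxE.
by rewrite !mxE.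
Qed.

Lemma t2m_zero (R : realType) (mu : R) N n (emb : 'I_n -> 'I_N) :
  t2m mu emb (mlzero R n) = 0.
Proof.
elim: n emb => [|n IH] emb /=; first by rewrite mpoly.mpolyC0.
by rewrite !IH mulr0 addr0.
Qed.

Lemma t2m_size (R : realType) (mu : R) N n (emb : 'I_n -> 'I_N) (T : ML R n) d :
  deg_ok T d -> (mpoly.msize (t2m mu emb T) <= d.+1)%N.
Proof.
elim: n emb T d => [|n IH] emb T d /=.
  by move=> _; rewrite mpoly.msizeC; case: (_ != 0).
case: T => a b /= [dA dB].
apply: (leq_trans (mpoly.msizeD_le _ _)); rewrite geq_max IH //=.
set p := (_ - _).
case: d dA dB => [|d] dA dB.
  by rewrite dB t2m_zero mulr0 mpoly.msize0.
set q := t2m _ _ b.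
have [->|q0] := eqVneq q 0; first by rewrite mulr0 mpoly.msize0.
have p0 : p != 0.
  apply/eqP => /(congr1 (mpoly.meval (fun _ => mu + 1))).
  rewrite mpoly.meval0 mpoly.mevalB mpoly.mevalC mpoly.mevalXU => /eqP.
  by rewrite addrAC subrr add0r oner_eq0.
rewrite mpoly.msizeM //.
have hp : (mpoly.msize p <= 2)%N.
  apply: (leq_trans (mpoly.msizeD_le _ _)); rewrite geq_max mpoly.msizeN mpoly.msizeC.
  by rewrite mpoly.msizeX mpoly.mdeg1 leqnn; case: (_ != 0).
have hq := IH (fun i => emb (rshift 1 i)) b d dB.
move: hp hq; set x1 := mpoly.msize p; set x2 := mpoly.msize q.
move=> hp hq; rewrite -subn1; lia.
Qed.

Lemma msize_deg_le (R : realType) N (p : mpoly.mpoly N R) d :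
  (mpoly.msize p <= d.+1)%N -> deg_le p d.
Proof.
move=> h m hm.
have := @mpoly.msize_mdeg_lt N R p m; rewrite mpoly.mcoeff_msupp => /(_ hm) h2.
by rewrite -ltnS; exact: leq_trans h2 h.
Qed.


Lemma mono_tree (R : realType) (mu : R) n (s : 'I_n -> nat) : (forall i, (s i <= 1)%N) ->
  exists T : ML R n, forall x, mleval mu T x = \prod_i (x ord0 i) ^+ s i.
Proof.
elim: n s => [|n IH] s hs.
  by exists 1 => x; rewrite big_ord0.
have [T' hT'] := IH (fun i => s (lift ord0 i)) (fun i => hs _).
have hx : forall x : 'rV[R]_(n.+1), \prod_i x ord0 i ^+ s i =
    lsubmx (x : 'rV_(1 + n)) ord0 ord0 ^+ s ord0 * mleval mu T' (rsubmx (x : 'rV_(1 + n))).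
  move=> x; rewrite big_ord_recl hT' mxE; congr (_ ^+ _ * _).
    by congr (x _ _); apply: val_inj.
  by apply: eq_bigr => i _; rewrite mxE; congr (x _ _ ^+ _); apply: val_inj.
have : s ord0 = 0%N \/ s ord0 = 1%N.
  by have := hs ord0; case: (s ord0) => [|[|k]] //; auto.
case=> e.
  exists ((T', mlzero R n) : ML R n.+1) => x.
  by rewrite hx e expr0 mul1r /= mleval_zero mulr0 addr0.
exists ((mlscale mu T', T') : ML R n.+1) => x.
rewrite hx e expr1 /= mleval_scale; genall; ring.
Qed.

Lemma f_tree (R : realType) (mu : R) n (f : mpoly.mpoly n R) : multilinear f ->
  exists T : ML R n, forall x, mleval mu T x = peval f x.
Proof.
move=> hf.
have hs : forall m, m \in msupp f -> forall i, (m i <= 1)%N.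
  by move=> m; rewrite mcoeff_msupp => /hf.
suff [T hT] : exists T : ML R n, forall x : 'rV[R]_n,
    mleval mu T x = \sum_(m <- msupp f) mcoeff m f * \prod_i (x ord0 i) ^+ m i.
  by exists T => x; rewrite hT /peval mevalE.
elim: (msupp f) hs => [|m l IHl] hl.
  by exists (mlzero R n) => x; rewrite mleval_zero big_nil.
have [T' hT'] := IHl (fun m' h => hl m' ltac:(by rewrite inE h orbT)).
have [Tm hTm] := @mono_tree R mu n (fun i => m i) (hl m (mem_head _ _)).
exists (mladd (mlscale (mcoeff m f) Tm) T') => x.
by rewrite mleval_add mleval_scale hTm hT' big_cons.
Qed.

Theorem mainTheorem4 (R : realType) (n : nat) (f : mpoly.mpoly n R)
  (D : probability R R) (mu sigma2 : R) (d : nat) :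
  multilinear f ->
  (forall x : 'rV[R]_n, (forall i, -1 <= x ord0 i <= 1) -> -1 <= peval f x <= 1) ->
  D.-integrable setT (fun t : R => t%:E) ->
  (\int[D]_t (t%:E) = mu%:E)%E ->
  (\int[D]_t (((t - mu) ^+ 2)%:E) = sigma2%:E)%E ->
  sigma2 < 1 - mu ^+ 2 ->
  exists g : mpoly.mpoly n R,
    deg_le g d /\
    (prodE D (fun x => ((peval f x - peval g x) ^+ 2)%:E)
       <= ((sigma2 / (1 - mu ^+ 2)) ^+ d)%:E)%E.
Proof.
move=> hml hbd ht hm hv hlt.
have s0 : 0 <= sigma2.
  have : (0 <= sigma2%:E)%E.
    by rewrite -hv integral_ge0 // => t _; rewrite lee_fin sqr_ge0.
  by rewrite lee_fin.
have hsp : 0 < 1 - mu ^+ 2 by lra.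
have hmu : -1 < mu < 1 by apply/andP; split; nra.
have [T hT] := @f_tree R mu n f hml.
have [G [dG hG]] := @ml_approx R sigma2 (1 - mu ^+ 2) n T d s0 (ltW hlt) hsp.
exists (t2m mu (fun i : 'I_n => i) G); split.
  by apply: msize_deg_le; exact: t2m_size.
have -> : (fun x => ((peval f x - peval (t2m mu (fun i : 'I_n => i) G) x) ^+ 2)%:E) =
    (fun x => (mleval mu (mladd T (mlscale (-1) G)) x ^+ 2)%:E).
  apply: funext => x; rewrite mleval_add mleval_scale -hT /peval t2m_eval.
  have -> : (\row_i x ord0 i) = x by apply/rowP => i; rewrite mxE.
  by rewrite mulN1r.
rewrite (@prodE_Q R D mu sigma2 n _ ht hm hv) lee_fin.
have hQ1 : mlQ (1 - mu ^+ 2) T <= 1.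
  apply: Qp_le1 => // x hx; rewrite hT.
  by have /andP[h1 h2] := hbd x hx; nra.
have hQ0 : 0 <= mlQ (1 - mu ^+ 2) T by apply: mlQ_ge0; exact: ltW.
have hr0 : 0 <= sigma2 / (1 - mu ^+ 2) by rewrite divr_ge0 // ltW.
have hr1 : sigma2 / (1 - mu ^+ 2) <= 1 by rewrite ler_pdivrMr // mul1r ltW.
apply: (le_trans hG); rewrite exprS.
move: hQ1 hQ0 hr0 hr1 (exprn_ge0 d hr0).
move: (sigma2 / (1 - mu ^+ 2)) (mlQ (1 - mu ^+ 2) T) => r q.
move: (r ^+ d) => a hq1 hq0 hr0 hr1 ha.
have hrq : r * q <= 1 by nra.
have -> : r * a * q = a * (r * q) by ring.
nra.
Qed.
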